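(* Let $-7/4<s\le0$. Then for every $t\in\mathbb{R}$ the bilinear operator $B_2$ defined in the context maps $\dot H^0\times\dot H^s$ into $\dot H^s$ and satisfies $$\|B_2(u,v)\|_{\dot H^s}\le c_2''(s)\|u\|_{\dot H^0}\|v\|_{\dot H^s},$$ with a constant $c_2''(s)$ depending only on $s$.
   Context: Write $\mathbb{Z}_0=\mathbb{Z}\setminus\{0\}$. For $s\in\mathbb{R}$, $\dot H^s$ denotes the Hilbert space of complex sequences $v=(v_k)_{k\in\mathbb{Z}_0}$ with $\|v\|_{\dot H^s}^2=\sum_{k\in\mathbb{Z}_0}|k|^{2s}|v_k|^2<\infty$. For $t\in\mathbb{R}$, $$B_2(u,v)_k=\sum_{k_1+k_2=k,\ k_1,k_2\in\mathbb{Z}_0}\frac{e^{3ikk_1k_2t}u_{k_1}v_{k_2}}{k_1k_2},\qquad k\in\mathbb{Z}_0.$$ *)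

(* Defs.v *)
From Stdlib Require Import Reals ZArith Lra.
From Coquelicot Require Import Coquelicot.
Open Scope R_scope.

(* Complex sequences indexed by Z; the value at index 0 is irrelevant
   (all sums below range over Z \ {0} only). *)
Definition zseq := Z -> C.

Definition zpos (n : nat) : Z := Z.of_nat (S n).
Definition zneg (n : nat) : Z := (- Z.of_nat (S n))%Z.

Definition ex_zsum (f : Z -> R) : Prop :=
  ex_series (fun n => f (zpos n) + f (zneg n)).
Definition zsum (f : Z -> R) : R :=
  Series (fun n => f (zpos n) + f (zneg n)).

Definition ex_zsum_abs_C (f : Z -> C) : Prop :=
  ex_zsum (fun k => Cmod (f k)).
Definition zsum_C (f : Z -> C) : C :=
  (zsum (fun k => Re (f k)), zsum (fun k => Im (f k))).

Definition wt (s : R) (k : Z) : R := Rpower (IZR (Z.abs k)) (2 * s).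

Definition in_Hs (s : R) (v : zseq) : Prop :=
  ex_zsum (fun k => wt s k * (Cmod (v k))^2).

Definition Hs_norm (s : R) (v : zseq) : R :=
  sqrt (zsum (fun k => wt s k * (Cmod (v k))^2)).

Definition cexpi (x : R) : C := (cos x, sin x).

(* The summand of B_2(u,v)_k indexed by k1 (with k2 = k - k1);
   it is 0 when k2 = 0, so summing over k1 in Z_0 realises the
   constraint k1, k2 in Z_0. *)
Definition B2_term (t : R) (u v : zseq) (k k1 : Z) : C :=
  let k2 := (k - k1)%Z in
  if Z.eqb k2 0 then 0%C
  else (cexpi (3 * IZR k * IZR k1 * IZR k2 * t) * u k1 * v k2
        / (RtoC (IZR k1) * RtoC (IZR k2)))%C.

Definition B2 (t : R) (u v : zseq) : zseq :=
  fun k => zsum_C (B2_term t u v k).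

(* Main.v *)
Require Import Defs.
From Stdlib Require Import Reals ZArith.
From Coquelicot Require Import Coquelicot.
From Stdlib Require Import Lra Lia List Psatz FinFun.
Open Scope R_scope.

Definition sumL (f : Z -> R) (l : list Z) : R :=
  fold_right (fun z acc => f z + acc) 0 l.

Fixpoint zwin (n : nat) : list Z :=
  match n with O => nil | S m => zpos m :: zneg m :: zwin m end.

Lemma sumL_le f g l : (forall z, In z l -> f z <= g z) -> sumL f l <= sumL g l.
Proof.
  induction l as [|a l IH]; simpl; intros H; [lra|].
  pose proof (H a (or_introl eq_refl)).
  assert (sumL f l <= sumL g l) by (apply IH; intros; apply H; right; auto). lra.
Qed.

Lemma sumL_nonneg f l : (forall z, In z l -> 0 <= f z) -> 0 <= sumL f l.
Proof.
  intros H. induction l as [|a l IH]; simpl; [lra|].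
  pose proof (H a (or_introl eq_refl)).
  assert (0 <= sumL f l) by (apply IH; intros; apply H; right; auto). lra.
Qed.

Lemma sumL_scal c f l : sumL (fun z => c * f z) l = c * sumL f l.
Proof. induction l; simpl; [ring|rewrite IHl; ring]. Qed.

Lemma sumL_plus f g l : sumL (fun z => f z + g z) l = sumL f l + sumL g l.
Proof. induction l; simpl; [ring|rewrite IHl; ring]. Qed.

Lemma sumL_map f g l : sumL f (map g l) = sumL (fun z => f (g z)) l.
Proof. induction l; simpl; [ring|rewrite IHl; ring]. Qed.

Lemma sumL_app f l m : sumL f (l ++ m) = sumL f l + sumL f m.
Proof. induction l; simpl; [ring|rewrite IHl; ring]. Qed.

Lemma sumL_swap (g : Z -> Z -> R) K L :
  sumL (fun k => sumL (fun k1 => g k k1) L) K =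
  sumL (fun k1 => sumL (fun k => g k k1) K) L.
Proof.
  induction K as [|a K IH]; simpl.
  - induction L; simpl; [ring|rewrite <- IHL; ring].
  - rewrite IH, <- sumL_plus. reflexivity.
Qed.

Lemma sumL_incl f l m : NoDup l -> incl l m -> (forall z, 0 <= f z) ->
  sumL f l <= sumL f m.
Proof.
  revert m; induction l as [|a l IH]; intros m Hnd Hi Hf; simpl.
  - apply sumL_nonneg; auto.
  - assert (Ha : In a m) by (apply Hi; left; auto).
    destruct (in_split _ _ Ha) as [m1 [m2 ->]].
    inversion Hnd; subst.
    assert (sumL f l <= sumL f (m1 ++ m2)).
    { apply IH; auto. intros z Hz. specialize (Hi z (or_intror Hz)).
      apply in_app_or in Hi. apply in_or_app. destruct Hi as [H|[H|H]]; auto.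
      subst; contradiction. }
    rewrite sumL_app in *. simpl. lra.
Qed.

Lemma CS_step s X Y x y : 0 <= X -> 0 <= Y -> s * s <= X * Y ->
  (s + x * y) * (s + x * y) <= (X + x * x) * (Y + y * y).
Proof.
  intros HX HY Hs.
  assert (2 * s * x * y <= X * (y*y) + x * x * Y).
  { assert (H1 : 0 <= X * (y*y) + x * x * Y) by nra.
    assert (H2 : (2*s*x*y)*(2*s*x*y) <= (X * (y*y) + x * x * Y)*(X * (y*y) + x * x * Y)).
    { assert (4*(s*s)*(x*x*(y*y)) <= 4*(X*Y)*(x*x*(y*y))).
      { apply Rmult_le_compat_r; [nra|lra]. }
      assert (0 <= (X*(y*y) - x*x*Y)*(X*(y*y) - x*x*Y)) by apply Rle_0_sqr.
      nra. }
    destruct (Rle_lt_dec (2*s*x*y) 0); [lra|].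
    destruct (Rle_lt_dec (2*s*x*y) (X * (y*y) + x * x * Y)) as [|Hc]; [auto|].
    exfalso. assert (X * (y*y) + x * x * Y < 2*s*x*y) by auto. nra. }
  nra.
Qed.

Lemma sumL_CS f g l : sumL (fun z => f z * g z) l * sumL (fun z => f z * g z) l
  <= sumL (fun z => f z * f z) l * sumL (fun z => g z * g z) l.
Proof.
  induction l as [|a l IH]; simpl; [lra|].
  pose proof (CS_step (sumL (fun z => f z * g z) l) (sumL (fun z => f z * f z) l)
    (sumL (fun z => g z * g z) l) (f a) (g a)) as H.
  assert (0 <= sumL (fun z => f z * f z) l) by (apply sumL_nonneg; intros; nra).
  assert (0 <= sumL (fun z => g z * g z) l) by (apply sumL_nonneg; intros; nra).
  specialize (H H0 H1 IH). lra.
Qed.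

Lemma In_zwin n z : In z (zwin n) <-> (z <> 0%Z /\ (Z.abs z <= Z.of_nat n)%Z).
Proof.
  induction n as [|n IH]; simpl.
  - split; [tauto|lia].
  - unfold zpos, zneg. rewrite IH. split.
    + intros [H|[H|H]]; lia.
    + intros [H1 H2].
      destruct (Z.eq_dec z (Z.of_nat (S n))) as [e|e]; [left; lia|].
      destruct (Z.eq_dec z (- Z.of_nat (S n))) as [e'|e']; [right; left; lia|].
      right; right; lia.
Qed.

Lemma NoDup_zwin n : NoDup (zwin n).
Proof.
  induction n as [|n IH]; simpl; constructor.
  - intros [H|H]; [unfold zpos, zneg in H; lia|].
    apply In_zwin in H. unfold zpos in H. lia.
  - constructor; auto. intros H. apply In_zwin in H. unfold zneg in H. lia.
Qed.

Definition PS (g : Z -> R) (n : nat) := sumL g (zwin n).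

Lemma sum_n_PS g N : sum_n (fun n => g (zpos n) + g (zneg n)) N = PS g (S N).
Proof.
  induction N as [|N IH].
  - rewrite sum_O. unfold PS; simpl. ring.
  - rewrite sum_Sn, IH. unfold PS. simpl. unfold plus; simpl. ring.
Qed.

Lemma PS_le_zsum g n : (forall z, 0 <= g z) -> ex_zsum g -> PS g n <= zsum g.
Proof.
  intros Hg [l Hl]. unfold zsum. rewrite (is_series_unique _ _ Hl).
  destruct n as [|n].
  - unfold PS; simpl.
    assert (Hp: forall m, 0 <= sum_n (fun n => g (zpos n) + g (zneg n)) m).
    { intros m. rewrite sum_n_PS. apply sumL_nonneg; auto. }
    eapply Rle_trans; [apply (Hp 0%nat)|].
    apply (is_lim_seq_incr_compare _ l Hl).
    intros m. rewrite sum_Sn. unfold plus; simpl. pose proof (Hg (zpos (S m))); pose proof (Hg (zneg (S m))). lra.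
  - rewrite <- sum_n_PS. apply (is_lim_seq_incr_compare _ l Hl).
    intros m. rewrite sum_Sn. unfold plus; simpl. pose proof (Hg (zpos (S m))); pose proof (Hg (zneg (S m))). lra.
Qed.

Lemma sumL_le_zsum f l : NoDup l -> (forall z, 0 <= f z) -> f 0%Z = 0 ->
  ex_zsum f -> sumL f l <= zsum f.
Proof.
  intros Hnd Hf H0 Hex.
  set (N := fold_right (fun z acc => (Z.to_nat (Z.abs z) + acc)%nat) 0%nat l).
  assert (HN : forall z, In z l -> (Z.abs z <= Z.of_nat N)%Z).
  { unfold N; clear. induction l as [|a l IH]; simpl; [tauto|].
    intros z [->|H]; [lia|]. specialize (IH z H). lia. }
  apply Rle_trans with (sumL f (0%Z :: zwin N)).
  - apply sumL_incl; auto. intros z Hz.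
    destruct (Z.eq_dec z 0) as [->|nz]; [left; auto|right].
    apply In_zwin; split; auto.
  - simpl. rewrite H0, Rplus_0_l. apply PS_le_zsum; auto.
Qed.

Lemma ex_zsum_bound g M : (forall z, 0 <= g z) -> (forall n, PS g n <= M) ->
  ex_zsum g /\ zsum g <= M.
Proof.
  intros Hg HM.
  assert (Hinc : forall m, sum_n (fun n => g (zpos n) + g (zneg n)) m <=
                     sum_n (fun n => g (zpos n) + g (zneg n)) (S m)).
  { intros m. rewrite sum_Sn. unfold plus; simpl. pose proof (Hg (zpos (S m))); pose proof (Hg (zneg (S m))). lra. }
  destruct (ex_finite_lim_seq_incr _ M Hinc) as [l Hl].
  { intros n. rewrite sum_n_PS. apply HM. }
  split.
  - exists l. exact Hl.
  - unfold zsum. rewrite (is_series_unique _ _ Hl).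
    assert (Rbar_le l M).
    { apply (is_lim_seq_le (sum_n (fun n : nat => g (zpos n) + g (zneg n))) (fun _ => M) l M); [|exact Hl|apply is_lim_seq_const].
      intros n; rewrite sum_n_PS; apply HM. }
    exact H.
Qed.

Lemma Rpower_pos x r : 0 < Rpower x r.
Proof. unfold Rpower; apply exp_pos. Qed.

Lemma Rpower_neg_mono a b r : r <= 0 -> 0 < a <= b -> Rpower b r <= Rpower a r.
Proof.
  intros Hr Hab. replace r with (- (- r)) by ring.
  rewrite (Rpower_Ropp b (-r)), (Rpower_Ropp a (-r)). apply Rinv_le_contravar; [apply Rpower_pos|].
  apply Rle_Rpower_l; lra.
Qed.

Lemma Rpower_2 x : 0 < x -> Rpower x 2 = x * x.
Proof. intros. replace 2 with (INR 2) by (simpl; ring). rewrite Rpower_pow; auto; simpl; ring. Qed.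

Lemma Rpower_4 x : 0 < x -> Rpower x 4 = x * x * (x * x).
Proof. intros. replace 4 with (INR 4) by (simpl; ring). rewrite Rpower_pow; auto; simpl; ring. Qed.

Lemma Kreal r X Y Z : -7/2 < r -> r <= 0 -> 1 <= X -> 1 <= Y -> 1 <= Z ->
  Z - X <= Y ->
  Rpower X r * / (Y*Y * (Z*Z)) <= 16 * (/(Y*Y) + /(X*X)) * Rpower Z r.
Proof.
  intros Hr1 Hr2 HX HY HZ HT.
  assert (PX := Rpower_pos X r). assert (PZ := Rpower_pos Z r).
  assert (0 < /(Y*Y)) by (apply Rinv_0_lt_compat; nra).
  assert (0 < /(X*X)) by (apply Rinv_0_lt_compat; nra).
  rewrite Rinv_mult.
  destruct (Rle_lt_dec (-2) r) as [Hr|Hr].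
  - assert (H1 : Rpower X r <= 1).
    { rewrite <- (Rpower_O X) by lra. apply Rle_Rpower; lra. }
    assert (H2 : / (Z*Z) <= Rpower Z r).
    { rewrite <- Rpower_2 by lra. rewrite <- Rpower_Ropp. apply Rle_Rpower; lra. }
    assert (/(Z*Z) <= 1) by (rewrite <- Rinv_1; apply Rinv_le_contravar; nra).
    assert (0 < /(Z*Z)) by (apply Rinv_0_lt_compat; nra).
    apply Rle_trans with (/(Y*Y) * / (Z*Z)).
    + apply Rle_trans with (1 * (/(Y*Y) * / (Z*Z))).
      * apply Rmult_le_compat_r; nra.
      * lra.
    + nra.
  - destruct (Rle_lt_dec Z (2*X)) as [Hc|Hc].
    + assert (H1 : Rpower X r <= Rpower (Z * /2) r) by (apply Rpower_neg_mono; lra).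
      rewrite <- Rpower_mult_distr in H1 by lra.
      assert (H2 : Rpower (/2) r <= 16).
      { unfold Rpower at 1. rewrite ln_Rinv by lra.
        replace (r * - ln 2) with ((-r) * ln 2) by ring.
        change (Rpower 2 (-r) <= 16).
        replace 16 with (Rpower 2 4).
        - apply Rle_Rpower; lra.
        - rewrite Rpower_4; lra. }
      assert (/(Z*Z) <= 1) by (rewrite <- Rinv_1; apply Rinv_le_contravar; nra).
      assert (0 < /(Z*Z)) by (apply Rinv_0_lt_compat; nra).
      assert (H7 : Rpower X r <= 16 * Rpower Z r) by nra.
      apply Rle_trans with (16 * Rpower Z r * (/(Y*Y) * /(Z*Z))).
      { apply Rmult_le_compat_r; [nra|lra]. }
      apply Rle_trans with (16 * Rpower Z r * (/(Y*Y))).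
      { apply Rmult_le_compat_l; [nra|]. rewrite <- (Rmult_1_r (/(Y*Y))) at 2.
        apply Rmult_le_compat_l; lra. }
      nra.
    + (* 2X < Z, so Y > Z/2 *)
      assert (HYZ : Z * Z <= 4 * (Y * Y)) by nra.
      assert (H1 : Rpower X (r+4) <= Rpower Z (r+4)) by (apply Rle_Rpower_l; lra).
      rewrite !Rpower_plus, !Rpower_4 in H1 by lra.
      assert (HX4 : 0 < X*X*(X*X)) by (repeat apply Rmult_lt_0_compat; lra).
      assert (HZ2 : 1 <= Z*Z) by (rewrite <- (Rmult_1_r 1); apply Rmult_le_compat; lra).
      assert (HY2 : 1 <= Y*Y) by (rewrite <- (Rmult_1_r 1); apply Rmult_le_compat; lra).
      assert (Hgoal : Rpower X r * (/(Y*Y) * /(Z*Z)) <= 16 * /(X*X) * Rpower Z r).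
      { rewrite <- Rinv_mult.
        apply Rle_trans with (4 * Rpower X r * / (Z*Z*(Z*Z))).
        - replace (4 * Rpower X r * / (Z*Z*(Z*Z))) with (Rpower X r * (4 * / (Z*Z*(Z*Z)))) by ring.
          apply Rmult_le_compat_l; [lra|].
          replace (4 * / (Z*Z*(Z*Z))) with (/ (Z*Z*(Z*Z) * /4)) by (field; nra).
          apply Rinv_le_contravar; nra.
        - apply Rle_trans with (4 * (Rpower Z r * / (X*X*(X*X)))).
          + rewrite Rmult_assoc. apply Rmult_le_compat_l; [lra|].
            assert (HZ4 : 0 < Z*Z*(Z*Z)) by (repeat apply Rmult_lt_0_compat; lra).
            replace (Rpower X r * / (Z*Z*(Z*Z))) with
              ((Rpower X r * (X*X*(X*X))) * / (X*X*(X*X) * (Z*Z*(Z*Z)))) by (field; lra).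
            replace (Rpower Z r * / (X*X*(X*X))) with
              ((Rpower Z r * (Z*Z*(Z*Z))) * / (X*X*(X*X) * (Z*Z*(Z*Z)))) by (field; lra).
            apply Rmult_le_compat_r; [|exact H1].
            left; apply Rinv_0_lt_compat, Rmult_lt_0_compat; lra.
          + replace (4 * (Rpower Z r * / (X*X*(X*X)))) with (4 * (/(X*X)) * (/(X*X)) * Rpower Z r)
              by (field; nra).
            assert (HX2 : 1 <= X*X) by (rewrite <- (Rmult_1_r 1); apply Rmult_le_compat; lra).
            assert (/(X*X) <= 1) by (rewrite <- Rinv_1; apply Rinv_le_contravar; lra).
            assert (0 <= (1 - /(X*X)) * (/(X*X) * Rpower Z r)) by (apply Rmult_le_pos; nra).
            nra. }
      assert (0 <= 16 * /(Y*Y) * Rpower Z r) by nra.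
      nra.
Qed.

Definition ax (k : Z) : R := IZR (Z.abs k).

Lemma ax_ge1 k : k <> 0%Z -> 1 <= ax k.
Proof. intros. unfold ax. apply IZR_le. lia. Qed.

Lemma Kineq s k k1 : -7/4 < s -> s <= 0 -> k <> 0%Z -> k1 <> 0%Z -> (k - k1 <> 0)%Z ->
  wt s k * / (ax k1 * ax k1 * (ax (k-k1)%Z * ax (k-k1)%Z)) <=
  16 * (/(ax k1 * ax k1) + /(ax k * ax k)) * wt s (k - k1)%Z.
Proof.
  intros H1 H2 Hk Hk1 Hk2. unfold wt. fold (ax k). fold (ax (k-k1)).
  apply Kreal; try lra; try (apply ax_ge1; auto).
  unfold ax. rewrite <- minus_IZR. apply IZR_le. lia.
Qed.

Definition cc (v : zseq) (k k1 : Z) : R :=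
  if Z.eqb (k - k1)%Z 0 then 0 else Cmod (v (k - k1)%Z) * / (ax k1 * ax (k - k1)%Z).

Definition beta (s : R) (v : zseq) (j : Z) : R :=
  if Z.eqb j 0 then 0 else wt s j * Cmod (v j) ^ 2.

Lemma Cmod_cexpi x : Cmod (cexpi x) = 1.
Proof.
  unfold cexpi, Cmod; simpl.
  replace (cos x * (cos x * 1) + sin x * (sin x * 1)) with 1. { apply sqrt_1. }
  pose proof (sin2_cos2 x). unfold Rsqr in H. lra.
Qed.

Lemma term_bound t u v k k1 : k1 <> 0%Z ->
  Cmod (B2_term t u v k k1) <= Cmod (u k1) * cc v k k1.
Proof.
  intros Hk1. unfold B2_term, cc. destruct (Z.eqb_spec (k - k1) 0) as [e|ne].
  - rewrite Cmod_0; lra.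
  -     rewrite Cmod_div.
    2:{ intros H. apply (f_equal Cmod) in H. rewrite Cmod_mult, !Cmod_R, ?Cmod_0, ?Rabs_R0 in H.
        apply Rmult_integral in H. destruct H as [H|H]; apply Rabs_eq_0 in H;
        apply eq_IZR_R0 in H; lia. }
    rewrite !Cmod_mult, Cmod_cexpi, !Cmod_R, <- !abs_IZR. fold (ax k1). fold (ax (k-k1)).
    unfold Rdiv. right. ring.
Qed.

Lemma wt_pos s k : 0 < wt s k.
Proof. unfold wt. apply Rpower_pos. Qed.

Lemma weight_bound s v k k1 : -7/4 < s -> s <= 0 -> k <> 0%Z -> k1 <> 0%Z ->
  wt s k * (cc v k k1 * cc v k k1) <=
  16 * (/(ax k1 * ax k1) + /(ax k * ax k)) * beta s v (k - k1)%Z.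
Proof.
  intros H1 H2 Hk Hk1. unfold cc, beta. destruct (Z.eqb_spec (k - k1) 0) as [e|ne].
  - right; ring.
  - pose proof (Kineq s k k1 H1 H2 Hk Hk1 ne) as K.
    assert (0 <= Cmod (v (k - k1)%Z) ^ 2) by (apply pow2_ge_0).
    pose proof (ax_ge1 k1 Hk1). pose proof (ax_ge1 _ ne).
    replace (wt s k * (Cmod (v (k - k1)%Z) * / (ax k1 * ax (k - k1)%Z) *
      (Cmod (v (k - k1)%Z) * / (ax k1 * ax (k - k1)%Z)))) with
      ((wt s k * / (ax k1 * ax k1 * (ax (k-k1)%Z * ax (k-k1)%Z))) * Cmod (v (k - k1)%Z) ^ 2)
      by (field; lra).
    replace (16 * (/ (ax k1 * ax k1) + / (ax k * ax k)) * (wt s (k - k1) * Cmod (v (k - k1)%Z) ^ 2))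
      with ((16 * (/ (ax k1 * ax k1) + / (ax k * ax k)) * wt s (k - k1)) * Cmod (v (k - k1)%Z) ^ 2)
      by ring.
    apply Rmult_le_compat_r; auto.
Qed.

Lemma inv_sq_sum n : sumL (fun j => /(ax j * ax j)) (zwin n) <= 4 - 4 / (INR n + 1).
Proof.
  induction n as [|n IH]; simpl.
  - rewrite Rplus_0_l. unfold Rdiv. rewrite Rinv_1. lra.
  - unfold zpos, zneg, ax.
    replace (Z.abs (Z.of_nat (S n))) with (Z.of_nat (S n)) by lia.
    replace (Z.abs (- Z.of_nat (S n))) with (Z.of_nat (S n)) by lia.
    rewrite <- INR_IZR_INZ, S_INR. fold ax. fold (sumL (fun j => /(ax j * ax j)) (zwin n)).
    pose proof (pos_INR n).
    assert (Hs : / ((INR n + 1) * (INR n + 1)) + (/ ((INR n + 1) * (INR n + 1)) + (4 - 4 / (INR n + 1)))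
       <= 4 - 4 / (INR n + 1 + 1)).
    { set (y := INR n + 1). assert (1 <= y) by (unfold y; lra).
      replace (4 - 4 / (y + 1)) with ((4 - 4 / y) + 4 / (y * (y+1))) by (field; lra).
      assert (2 / (y*y) <= 4 / (y * (y+1))).
      { unfold Rdiv. apply Rle_trans with (2 * (2 * / (y * (y+1)))).
        - apply Rmult_le_compat_l; [lra|].
          replace (2 * / (y * (y + 1))) with (/ (y * (y+1) / 2)) by (field; lra).
          apply Rinv_le_contravar; [apply Rmult_lt_0_compat; nra|]. nra.
        - lra. }
      unfold Rdiv in *. lra. }
    change (match n with | 0%nat => 1 | S _ => INR n + 1 end) with (INR (S n)).
    rewrite S_INR.
    change (sumL (fun j : Z => / (IZR (Z.abs j) * IZR (Z.abs j))) (zwin n)) with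
      (sumL (fun j => /(ax j * ax j)) (zwin n)).
    lra.
Qed.

Lemma sumL_ext f g l : (forall z, In z l -> f z = g z) -> sumL f l = sumL g l.
Proof. intros H; apply Rle_antisym; apply sumL_le; intros; rewrite H; auto; lra. Qed.

Lemma inv_sq_sum4 n : sumL (fun j => /(ax j * ax j)) (zwin n) <= 4.
Proof.
  pose proof (inv_sq_sum n). assert (0 <= 4 / (INR n + 1)).
  { unfold Rdiv. apply Rmult_le_pos; [lra|]. left; apply RinvN_pos. }
  lra.
Qed.


Lemma sq_inv_nonneg x : 0 <= / (x * x).
Proof.
  destruct (Req_dec x 0) as [->|n].
  - rewrite Rmult_0_l, Rinv_0; lra.
  - left; apply Rinv_0_lt_compat. nra.
Qed.

Definition Pc (f : Z -> C) (l : list Z) : C :=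
  (sumL (fun z => Re (f z)) l, sumL (fun z => Im (f z)) l).

Lemma Cmod_Pc f l : Cmod (Pc f l) <= sumL (fun z => Cmod (f z)) l.
Proof.
  induction l as [|a l IH]; unfold Pc in *; simpl.
  - change (Cmod (RtoC 0) <= 0). rewrite Cmod_R, Rabs_R0; lra.
  - replace (Re (f a) + sumL (fun z => Re (f z)) l, Im (f a) + sumL (fun z => Im (f z)) l)
      with (Cplus (f a) (sumL (fun z => Re (f z)) l, sumL (fun z => Im (f z)) l)).
    + eapply Rle_trans; [apply Cmod_triangle|]. lra.
    + destruct (f a); reflexivity.
Qed.

Lemma beta_nonneg s v j : 0 <= beta s v j.
Proof.
  unfold beta. destruct (Z.eqb j 0); [lra|].
  apply Rmult_le_pos; [left; apply wt_pos|apply pow2_ge_0].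
Qed.

Lemma beta_zsum s v : in_Hs s v ->
  ex_zsum (beta s v) /\ zsum (beta s v) = zsum (fun k => wt s k * Cmod (v k) ^ 2).
Proof.
  intros H.
  assert (E : forall n, beta s v (zpos n) + beta s v (zneg n) =
    wt s (zpos n) * Cmod (v (zpos n)) ^ 2 + wt s (zneg n) * Cmod (v (zneg n)) ^ 2).
  { intros n. unfold beta. replace (Z.eqb (zpos n) 0) with false by (unfold zpos; symmetry; apply Z.eqb_neq; lia).
    replace (Z.eqb (zneg n) 0) with false by (unfold zneg; symmetry; apply Z.eqb_neq; lia). reflexivity. }
  split.
  - unfold ex_zsum. eapply ex_series_ext; [|exact H]. intros n; symmetry; apply E.
  - unfold zsum. apply Series_ext. apply E.
Qed.

Lemma shift_le s v c N sg : in_Hs s v -> (sg = 1 \/ sg = -1)%Z ->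
  sumL (fun k => beta s v (sg * k + c)%Z) (zwin N) <= zsum (fun k => wt s k * Cmod (v k) ^ 2).
Proof.
  intros H Hsg. destruct (beta_zsum s v H) as [He Hz]. rewrite <- Hz.
  rewrite <- (sumL_map (beta s v) (fun k => (sg * k + c)%Z)).
  apply sumL_le_zsum; auto.
  - apply Injective_map_NoDup; [|apply NoDup_zwin]. intros x y Hxy. nia.
  - apply beta_nonneg.
Qed.

Section Main.
Variables (s t : R) (u v : zseq).
Hypothesis (hs1 : -7/4 < s) (hs2 : s <= 0) (Hu : in_Hs 0 u) (Hv : in_Hs s v).

Let A := zsum (fun k => wt 0 k * Cmod (u k) ^ 2).
Let Bv := zsum (fun k => wt s k * Cmod (v k) ^ 2).

Lemma A_nonneg : 0 <= A.
Proof.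
  pose proof (PS_le_zsum (fun k => wt 0 k * Cmod (u k) ^ 2) 0).
  unfold PS in H; simpl in H. apply H; auto.
  intros z; apply Rmult_le_pos; [left; apply wt_pos|apply pow2_ge_0].
Qed.

Lemma Bv_nonneg : 0 <= Bv.
Proof.
  pose proof (PS_le_zsum (fun k => wt s k * Cmod (v k) ^ 2) 0).
  unfold PS in H; simpl in H. apply H; auto.
  intros z; apply Rmult_le_pos; [left; apply wt_pos|apply pow2_ge_0].
Qed.

Lemma a_sum M : sumL (fun j => Cmod (u j) * Cmod (u j)) (zwin M) <= A.
Proof.
  apply Rle_trans with (PS (fun k => wt 0 k * Cmod (u k) ^ 2) M).
  - unfold PS. apply sumL_le. intros z Hz. apply In_zwin in Hz.
    unfold wt. rewrite Rmult_0_r, Rpower_O.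
    + simpl; lra.
    + apply IZR_lt; lia.
  - apply PS_le_zsum; auto.
    intros z; apply Rmult_le_pos; [left; apply wt_pos|apply pow2_ge_0].
Qed.

Definition GG (k k1 : Z) : R :=
  16 * (/(ax k1 * ax k1) + /(ax k * ax k)) * beta s v (k - k1)%Z.

Lemma per_k k M : k <> 0%Z ->
  wt s k * Cmod (Pc (B2_term t u v k) (zwin M)) ^ 2 <= A * sumL (GG k) (zwin M).
Proof.
  intros Hk.
  set (S2 := sumL (fun k1 => Cmod (u k1) * cc v k k1) (zwin M)).
  assert (H1 : Cmod (Pc (B2_term t u v k) (zwin M)) <= S2).
  { eapply Rle_trans; [apply Cmod_Pc|]. apply sumL_le. intros z Hz.
    apply In_zwin in Hz. apply term_bound. tauto. }
  assert (H0 := Cmod_ge_0 (Pc (B2_term t u v k) (zwin M))).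
  assert (H2 : Cmod (Pc (B2_term t u v k) (zwin M)) ^ 2 <= S2 * S2).
  { simpl. rewrite Rmult_1_r. apply Rmult_le_compat; lra. }
  assert (H3 := sumL_CS (fun j => Cmod (u j)) (cc v k) (zwin M)). fold S2 in H3.
  assert (H4 := a_sum M).
  assert (H5 : 0 <= sumL (fun z => cc v k z * cc v k z) (zwin M))
    by (apply sumL_nonneg; intros; apply Rle_0_sqr).
  assert (H6 : wt s k * sumL (fun z => cc v k z * cc v k z) (zwin M) <= sumL (GG k) (zwin M)).
  { rewrite <- sumL_scal. apply sumL_le. intros z Hz. apply In_zwin in Hz.
    apply weight_bound; tauto. }
  pose proof (wt_pos s k).
  apply Rle_trans with (wt s k * (A * sumL (fun z => cc v k z * cc v k z) (zwin M))).
  - apply Rmult_le_compat_l; [lra|]. eapply Rle_trans; [exact H2|].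
    eapply Rle_trans; [exact H3|]. apply Rmult_le_compat_r; lra.
  - pose proof A_nonneg. nra.
Qed.

Lemma finite_bound N M :
  sumL (fun k => wt s k * Cmod (Pc (B2_term t u v k) (zwin M)) ^ 2) (zwin N) <= 128 * A * Bv.
Proof.
  apply Rle_trans with (sumL (fun k => A * sumL (GG k) (zwin M)) (zwin N)).
  { apply sumL_le. intros z Hz. apply In_zwin in Hz. apply per_k. tauto. }
  rewrite sumL_scal. replace (128 * A * Bv) with (A * (128 * Bv)) by ring. apply Rmult_le_compat_l; [apply A_nonneg|].
  unfold GG.
  rewrite (sumL_ext _ (fun k => sumL (fun k1 => 16 * /(ax k1 * ax k1) * beta s v (k - k1)%Z) (zwin M)
     + 16 * /(ax k * ax k) * sumL (fun k1 => beta s v (k - k1)%Z) (zwin M))).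
  2:{ intros k _. rewrite <- sumL_scal, <- sumL_plus. apply sumL_ext. intros; ring. }
  rewrite sumL_plus, sumL_swap.
  assert (T1 : sumL (fun k1 => sumL (fun k => 16 * / (ax k1 * ax k1) * beta s v (k - k1)%Z) (zwin N)) (zwin M)
     <= 64 * Bv).
  { apply Rle_trans with (sumL (fun k1 => (16 * Bv) * / (ax k1 * ax k1)) (zwin M)).
    - apply sumL_le. intros k1 _. rewrite sumL_scal.
      pose proof (shift_le s v (-k1) N 1 Hv (or_introl eq_refl)).
      rewrite (sumL_ext _ (fun k => beta s v (k - k1)%Z)) in H by (intros; f_equal; lia).
      fold Bv in H. pose proof (sq_inv_nonneg (ax k1)).
      replace (16 * Bv * / (ax k1 * ax k1)) with (16 * / (ax k1 * ax k1) * Bv) by ring.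
      apply Rmult_le_compat_l; lra.
    - rewrite sumL_scal. pose proof (inv_sq_sum4 M). pose proof Bv_nonneg. nra. }
  assert (T2 : sumL (fun k => 16 * / (ax k * ax k) * sumL (fun k1 => beta s v (k - k1)%Z) (zwin M)) (zwin N)
     <= 64 * Bv).
  { apply Rle_trans with (sumL (fun k => (16 * Bv) * / (ax k * ax k)) (zwin N)).
    - apply sumL_le. intros k _.
      pose proof (shift_le s v k M (-1) Hv (or_intror eq_refl)).
      rewrite (sumL_ext _ (fun k1 => beta s v (k - k1)%Z)) in H by (intros; f_equal; lia).
      fold Bv in H. pose proof (sq_inv_nonneg (ax k)).
      replace (16 * Bv * / (ax k * ax k)) with (16 * / (ax k * ax k) * Bv) by ring.
      apply Rmult_le_compat_l; lra.
    - rewrite sumL_scal. pose proof (inv_sq_sum4 N). pose proof Bv_nonneg. nra. }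
  lra.
Qed.

End Main.

Lemma inv_sq_le1 j : j <> 0%Z -> /(ax j * ax j) <= 1.
Proof.
  intros Hj. pose proof (ax_ge1 j Hj).
  rewrite <- Rinv_1. apply Rinv_le_contravar; [lra|].
  rewrite <- (Rmult_1_r 1). apply Rmult_le_compat; lra.
Qed.

Lemma abs_sum s t u v k : -7/4 < s -> s <= 0 -> in_Hs 0 u -> in_Hs s v -> k <> 0%Z ->
  ex_zsum_abs_C (B2_term t u v k).
Proof.
  intros hs1 hs2 Hu Hv Hk.
  set (A := zsum (fun k => wt 0 k * Cmod (u k) ^ 2)).
  set (Bv := zsum (fun k => wt s k * Cmod (v k) ^ 2)).
  pose proof (wt_pos s k) as Pw.
  unfold ex_zsum_abs_C.
  refine (proj1 (ex_zsum_bound (fun z => Cmod (B2_term t u v k z)) ((A + / wt s k * (32 * Bv)) / 2) (fun z => Cmod_ge_0 _) _)).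
  intros n. unfold PS.
  apply Rle_trans with (sumL (fun k1 => Cmod (u k1) * cc v k k1) (zwin n)).
  { apply sumL_le. intros z Hz. apply In_zwin in Hz. apply term_bound; tauto. }
  apply Rle_trans with (sumL (fun k1 => (Cmod (u k1) * Cmod (u k1) + cc v k k1 * cc v k k1) / 2) (zwin n)).
  { apply sumL_le. intros z _. pose proof (Rle_0_sqr (Cmod (u z) - cc v k z)). unfold Rsqr in H. lra. }
  unfold Rdiv. rewrite (sumL_ext _ (fun k1 => /2 * (Cmod (u k1) * Cmod (u k1) + cc v k k1 * cc v k k1)))
    by (intros; ring).
  rewrite sumL_scal, sumL_plus.
  pose proof (a_sum u Hu n) as HA. fold A in HA.
  assert (Hc : sumL (fun k1 => cc v k k1 * cc v k k1) (zwin n) <= / wt s k * (32 * Bv)).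
  { apply Rle_trans with (sumL (fun k1 => / wt s k * (32 * beta s v (k - k1)%Z)) (zwin n)).
    - apply sumL_le. intros z Hz. apply In_zwin in Hz.
      pose proof (weight_bound s v k z hs1 hs2 Hk (proj1 Hz)).
      pose proof (inv_sq_le1 z (proj1 Hz)). pose proof (inv_sq_le1 k Hk).
      pose proof (beta_nonneg s v (k - z)%Z).
      assert (wt s k * (cc v k z * cc v k z) <= 32 * beta s v (k - z)%Z) by nra.
      replace (cc v k z * cc v k z) with (/ wt s k * (wt s k * (cc v k z * cc v k z)))
        by (field; lra).
      apply Rmult_le_compat_l; [left; apply Rinv_0_lt_compat; lra|lra].
    - rewrite sumL_scal, sumL_scal. apply Rmult_le_compat_l; [left; apply Rinv_0_lt_compat; lra|].
      apply Rmult_le_compat_l; [lra|].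
      pose proof (shift_le s v k n (-1) Hv (or_intror eq_refl)).
      rewrite (sumL_ext _ (fun k1 => beta s v (k - k1)%Z)) in H by (intros; f_equal; lia).
      exact H. }
  lra.
Qed.

Lemma lim_sumL (h : nat -> Z -> R) (L : Z -> R) K :
  (forall k, In k K -> is_lim_seq (fun M => h M k) (L k)) ->
  is_lim_seq (fun M => sumL (h M) K) (sumL L K).
Proof.
  induction K as [|a K IH]; intros H; simpl.
  - apply is_lim_seq_const.
  - apply (is_lim_seq_plus' (fun M => h M a) (fun M => sumL (h M) K)).
    + apply H; left; auto.
    + apply IH. intros; apply H; right; auto.
Qed.

Lemma lim_part (f : Z -> C) (p : C -> R) : ex_zsum (fun z => Cmod (f z)) ->
  (forall c, Rabs (p c) <= Cmod c) ->
  is_lim_seq (fun M => sumL (fun z => p (f z)) (zwin (S M))) (zsum (fun z => p (f z))).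
Proof.
  intros Hex Hp.
  assert (He : ex_series (fun n => p (f (zpos n)) + p (f (zneg n)))).
  { eapply (@ex_series_le R_AbsRing R_CompleteNormedModule); [|exact Hex]. intros n.
    change (norm (p (f (zpos n)) + p (f (zneg n)))) with (Rabs (p (f (zpos n)) + p (f (zneg n)))).
    eapply Rle_trans; [apply Rabs_triang|]. pose proof (Hp (f (zpos n))); pose proof (Hp (f (zneg n))). lra. }
  pose proof (Series_correct _ He) as Hs.
  eapply is_lim_seq_ext; [|exact Hs]. intros M. exact (sum_n_PS (fun z => p (f z)) M).
Qed.

Lemma im_le_Cmod c : Rabs (Im c) <= Cmod c.
Proof.
  destruct c as [x y]. unfold Cmod; simpl. rewrite <- sqrt_Rsqr_abs. apply sqrt_le_1_alt.
  unfold Rsqr. pose proof (Rle_0_sqr x). unfold Rsqr in H. lra.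
Qed.

Theorem lemma7p6 (s : R) (hs1 : -7/4 < s) (hs2 : s <= 0) :
  exists c2 : R, 0 <= c2 /\
    forall (t : R) (u v : zseq), in_Hs 0 u -> in_Hs s v ->
      (forall k : Z, k <> 0%Z -> ex_zsum_abs_C (B2_term t u v k)) /\
      in_Hs s (B2 t u v) /\
      Hs_norm s (B2 t u v) <= c2 * Hs_norm 0 u * Hs_norm s v.
Proof.
  exists (sqrt 128). split; [apply sqrt_pos|].
  intros t u v Hu Hv.
  assert (Habs : forall k : Z, k <> 0%Z -> ex_zsum_abs_C (B2_term t u v k)).
  { intros k Hk. apply (abs_sum s); auto. }
  split; [exact Habs|].
  set (A := zsum (fun k => wt 0 k * Cmod (u k) ^ 2)).
  set (Bv := zsum (fun k => wt s k * Cmod (v k) ^ 2)).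
  assert (HA := A_nonneg u Hu). assert (HB := Bv_nonneg s v Hv). fold A in HA. fold Bv in HB.
  assert (Hlim : forall k, k <> 0%Z ->
    is_lim_seq (fun M => wt s k * Cmod (Pc (B2_term t u v k) (zwin (S M))) ^ 2)
               (wt s k * Cmod (B2 t u v k) ^ 2)).
  { intros k Hk. specialize (Habs k Hk).
    pose proof (lim_part _ Re Habs re_le_Cmod) as HR.
    pose proof (lim_part _ Im Habs im_le_Cmod) as HI.
    set (PR := fun M => sumL (fun z : Z => Re (B2_term t u v k z)) (zwin (S M))) in HR.
    set (PI := fun M => sumL (fun z : Z => Im (B2_term t u v k z)) (zwin (S M))) in HI.
    apply (is_lim_seq_ext (fun M => wt s k * (PR M * PR M + PI M * PI M))).
    { intros M. rewrite Cmod2_alt. unfold PR, PI. cbv [Pc Re Im fst snd]. ring. }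
    replace (wt s k * Cmod (B2 t u v k) ^ 2) with
      (wt s k * (zsum (fun z : Z => Re (B2_term t u v k z)) * zsum (fun z : Z => Re (B2_term t u v k z))
        + zsum (fun z : Z => Im (B2_term t u v k z)) * zsum (fun z : Z => Im (B2_term t u v k z)))).
    2:{ rewrite Cmod2_alt. unfold B2, zsum_C. cbv [Re Im fst snd]. ring. }
    apply is_lim_seq_mult'; [apply is_lim_seq_const|].
    apply is_lim_seq_plus'; apply is_lim_seq_mult'; assumption. }
  assert (HPS : forall N, PS (fun k => wt s k * Cmod (B2 t u v k) ^ 2) N <= 128 * A * Bv).
  { intros N.
    assert (Hl := lim_sumL (fun M k => wt s k * Cmod (Pc (B2_term t u v k) (zwin (S M))) ^ 2)
                     (fun k => wt s k * Cmod (B2 t u v k) ^ 2) (zwin N)).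
    assert (Hl' : is_lim_seq (fun M => sumL (fun k => wt s k * Cmod (Pc (B2_term t u v k) (zwin (S M))) ^ 2) (zwin N))
                  (PS (fun k => wt s k * Cmod (B2 t u v k) ^ 2) N)).
    { apply Hl. intros k Hk. apply In_zwin in Hk. apply Hlim. tauto. }
    assert (Rbar_le (PS (fun k => wt s k * Cmod (B2 t u v k) ^ 2) N) (128 * A * Bv)).
    { refine (is_lim_seq_le _ (fun _ => 128 * A * Bv) _ _ _ Hl' (is_lim_seq_const _)).
      intros M. apply finite_bound; auto. }
    exact H. }
  destruct (ex_zsum_bound (fun k => wt s k * Cmod (B2 t u v k) ^ 2) (128 * A * Bv)) as [Hex Hz].
  { intros z; apply Rmult_le_pos; [left; apply wt_pos|apply pow2_ge_0]. }
  { exact HPS. }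
  split; [exact Hex|].
  unfold Hs_norm. fold A. fold Bv.
  rewrite <- !sqrt_mult by lra.
  apply sqrt_le_1_alt. lra.
Qed.
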